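(* For every nonnegative integer $r$, $$\sum_{n=1}^{\infty}\frac{1}{(n+1)(2n+3)(2n+2r+3)}\frac{\binom{2n}{n}}{\binom{2n+2r+2}{n+r+1}}=\frac{1}{2(2r+1)\binom{2r}{r}}-\frac{1}{3(2r+3)\binom{2r+2}{r+1}}-\frac{1}{2^{2r+1}}\left(\frac{1}{4(r+1)}+\frac{\binom{2r}{r}}{2\cdot 4^{r+1}}\left(\frac{\pi^2}{2}+\sum_{k=1}^r\frac{4^k}{k^2\binom{2k}{k}}\right)\right).$$ *)

(* Defs.v *)
From Stdlib Require Import Reals.
From Coquelicot Require Import Coquelicot.
Open Scope R_scope.

Definition binomR (m k : nat) : R := Binomial.C m k.

Fixpoint sum1 (f : nat -> R) (r : nat) : R :=
  match r with O => 0 | S r' => sum1 f r' + f r end.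

Definition term5 (r n : nat) : R :=
  1 / ((INR n + 1) * (2 * INR n + 3) * (2 * INR n + 2 * INR r + 3))
  * (binomR (2 * n) n / binomR (2 * n + 2 * r + 2) (n + r + 1)).

Definition rhs5 (r : nat) : R :=
  1 / (2 * (2 * INR r + 1) * binomR (2 * r) r)
  - 1 / (3 * (2 * INR r + 3) * binomR (2 * r + 2) (r + 1))
  - 1 / 2 ^ (2 * r + 1) *
    (1 / (4 * (INR r + 1))
     + binomR (2 * r) r / (2 * 4 ^ (r + 1)) *
       (PI ^ 2 / 2 + sum1 (fun k => 4 ^ k / (INR k ^ 2 * binomR (2 * k) k)) r)).

(* Main.v *)
Require Import Defs.
From Stdlib Require Import Reals Lra Lia.
From Coquelicot Require Import Coquelicot.
Open Scope R_scope.

Definition Ifun (n : nat) (x : R) := cos x ^ (2 * n).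
Definition Jfun (n : nat) (x : R) := x ^ 2 * cos x ^ (2 * n).
Definition Ib (n : nat) := RInt (Ifun n) 0 (PI / 2).
Definition Jb (n : nat) := RInt (Jfun n) 0 (PI / 2).

Lemma sc_trick (x a b K : R) : a - b = K * (sin x ^ 2 + cos x ^ 2 - 1) -> a = b.
Proof. intro H. assert (E : sin x ^ 2 + cos x ^ 2 = 1) by (rewrite <- (sin2_cos2 x); unfold Rsqr; ring). rewrite E in H. lra. Qed.

Lemma ex_Ifun n : ex_RInt (Ifun n) 0 (PI / 2).
Proof. apply (@ex_RInt_continuous R_CompleteNormedModule). intros z _. apply (@ex_derive_continuous R_AbsRing R_NormedModule). unfold Ifun. auto_derive. auto. Qed.
Lemma ex_Jfun n : ex_RInt (Jfun n) 0 (PI / 2).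
Proof. apply (@ex_RInt_continuous R_CompleteNormedModule). intros z _. apply (@ex_derive_continuous R_AbsRing R_NormedModule). unfold Jfun. auto_derive. auto. Qed.

Lemma Ib_0 : Ib 0 = PI / 2.
Proof.
unfold Ib. apply is_RInt_unique.
apply is_RInt_ext with (fun _ => 1). intros x _. unfold Ifun. simpl. ring.
replace (PI / 2) with (scal (PI / 2 - 0) 1) at 2. apply (@is_RInt_const R_NormedModule).
unfold scal; simpl; unfold mult; simpl. ring.
Qed.
Lemma Jb_0 : Jb 0 = PI ^ 3 / 24.
Proof.
unfold Jb. apply is_RInt_unique.
apply is_RInt_ext with (fun x => x ^ 2). intros x _. unfold Jfun. simpl. ring.
replace (PI ^ 3 / 24) with (minus ((PI/2)^3/3) (0^3/3)).
apply (@is_RInt_derive R_CompleteNormedModule (fun x => x ^ 3 / 3)).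
intros x _. auto_derive. auto. simpl. field.
intros x _. apply (@ex_derive_continuous R_AbsRing R_NormedModule). auto_derive. auto.
unfold minus, plus, opp; simpl. field.
Qed.

Ltac fixINR := repeat match goal with |- context [match ?k with 0%nat => 1 | S _ => INR ?k + 1 end] => change (match k with 0%nat => 1 | S _ => INR k + 1 end) with (INR (S k)) end.

Lemma cosPI2_pow k : cos (PI / 2) ^ S k = 0.
Proof. rewrite cos_PI2. simpl. ring. Qed.

Lemma Ib_rec n : (2 * INR n + 2) * Ib (S n) = (2 * INR n + 1) * Ib n.
Proof.
assert (H1 : is_RInt (fun x => (2 * INR n + 2) * Ifun (S n) x - (2 * INR n + 1) * Ifun n x) 0 (PI / 2)
   ((2 * INR n + 2) * Ib (S n) - (2 * INR n + 1) * Ib n)).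
{ apply (@is_RInt_minus R_NormedModule); apply (@is_RInt_scal R_NormedModule); apply (@RInt_correct R_CompleteNormedModule); [apply ex_Ifun|apply ex_Ifun]. }
assert (H2 : is_RInt (fun x => (2 * INR n + 2) * Ifun (S n) x - (2 * INR n + 1) * Ifun n x) 0 (PI / 2)
   (minus (sin (PI/2) * cos (PI/2) ^ (S (2 * n))) (sin 0 * cos 0 ^ (S (2*n))))).
{ apply (@is_RInt_derive R_CompleteNormedModule (fun x => sin x * cos x ^ (S (2 * n)))).
  - intros x _. auto_derive. auto. fixINR. replace (n + (n+0))%nat with (2*n)%nat by lia.
    unfold Ifun. replace (2 * S n)%nat with (S (S (2*n))) by lia. rewrite S_INR, mult_INR. repeat rewrite <- tech_pow_Rmult. set (C := cos x ^ (2 * n)).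
    apply (sc_trick x) with (K := - (2 * INR n + 1) * C). simpl INR. ring.
  - intros x _. apply (@ex_derive_continuous R_AbsRing R_NormedModule). unfold Ifun. auto_derive. auto. }
rewrite cosPI2_pow, sin_0 in H2.
apply (@is_RInt_unique R_CompleteNormedModule) in H1. apply (@is_RInt_unique R_CompleteNormedModule) in H2. rewrite H1 in H2.
unfold minus, plus, opp in H2; simpl in H2. lra.
Qed.

Lemma Jb_rec n : Ib (S n) + 2 * (INR n + 1) ^ 2 * Jb (S n) - (INR n + 1) * (2 * INR n + 1) * Jb n = 0.
Proof.
assert (H1 : is_RInt (fun x => Ifun (S n) x + 2 * (INR n + 1) ^ 2 * Jfun (S n) x - (INR n + 1) * (2 * INR n + 1) * Jfun n x) 0 (PI / 2)
   (Ib (S n) + 2 * (INR n + 1) ^ 2 * Jb (S n) - (INR n + 1) * (2 * INR n + 1) * Jb n)).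
{ apply (@is_RInt_minus R_NormedModule). apply (@is_RInt_plus R_NormedModule).
  apply (@RInt_correct R_CompleteNormedModule); apply ex_Ifun.
  apply (@is_RInt_scal R_NormedModule); apply (@RInt_correct R_CompleteNormedModule); apply ex_Jfun.
  apply (@is_RInt_scal R_NormedModule); apply (@RInt_correct R_CompleteNormedModule); apply ex_Jfun. }
assert (H2 : is_RInt (fun x => Ifun (S n) x + 2 * (INR n + 1) ^ 2 * Jfun (S n) x - (INR n + 1) * (2 * INR n + 1) * Jfun n x) 0 (PI / 2)
   (minus (PI / 2 * cos (PI/2) ^ (S (S (2 * n))) + (INR n + 1) * (PI/2) ^ 2 * sin (PI/2) * cos (PI/2) ^ (S (2 * n)))
          (0 * cos 0 ^ (S (S (2 * n))) + (INR n + 1) * 0 ^ 2 * sin 0 * cos 0 ^ (S (2 * n))))).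
{ apply (@is_RInt_derive R_CompleteNormedModule (fun x => x * cos x ^ (S (S (2 * n))) + (INR n + 1) * x ^ 2 * sin x * cos x ^ (S (2 * n)))).
  - intros x _. auto_derive. auto. fixINR. replace (n + (n+0))%nat with (2*n)%nat by lia.
    unfold Ifun, Jfun. replace (2 * S n)%nat with (S (S (2*n))) by lia. rewrite !S_INR, mult_INR. repeat rewrite <- tech_pow_Rmult. set (C := cos x ^ (2 * n)).
    apply (sc_trick x) with (K := - (INR n + 1) * (2 * INR n + 1) * x ^ 2 * C). simpl INR. ring.
  - intros x _. apply (@ex_derive_continuous R_AbsRing R_NormedModule). unfold Ifun, Jfun. auto_derive. auto. }
rewrite !cosPI2_pow in H2.
apply (@is_RInt_unique R_CompleteNormedModule) in H1. apply (@is_RInt_unique R_CompleteNormedModule) in H2. rewrite H1 in H2.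
rewrite H2. unfold minus, plus, opp; simpl. ring.
Qed.

Lemma xcos_le_sin x : 0 <= x <= PI / 2 -> x * cos x <= sin x.
Proof.
intros Hx.
assert (H : is_RInt (fun t => t * sin t) 0 x (minus (sin x - x * cos x) (sin 0 - 0 * cos 0))).
{ apply (@is_RInt_derive R_CompleteNormedModule (fun t => sin t - t * cos t)).
  - intros t _. auto_derive. auto. simpl. ring.
  - intros t _. apply (@ex_derive_continuous R_AbsRing R_NormedModule). auto_derive. auto. }
assert (H0 : 0 <= RInt (fun t => t * sin t) 0 x).
{ apply RInt_ge_0. lra. eexists; exact H. intros t Ht. apply Rmult_le_pos. lra. apply sin_ge_0; pose proof PI_RGT_0; lra. }
apply (@is_RInt_unique R_CompleteNormedModule) in H. rewrite H in H0. rewrite sin_0 in H0.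
unfold minus, plus, opp in H0; simpl in H0. lra.
Qed.

Lemma PI2_pos : 0 < PI / 2.
Proof. pose proof PI_RGT_0. lra. Qed.

Lemma Jb_ge0 n : 0 <= Jb n.
Proof.
unfold Jb. apply RInt_ge_0. pose proof PI2_pos; lra. apply ex_Jfun.
intros x Hx. unfold Jfun. pose proof PI2_pos. apply Rmult_le_pos. apply pow2_ge_0. apply pow_le. apply cos_ge_0; lra.
Qed.

Lemma Jb_le n : Jb (S n) <= Ib n - Ib (S n).
Proof.
pose proof PI2_pos.
assert (H1 : is_RInt (fun x => Ifun n x - Ifun (S n) x) 0 (PI / 2) (Ib n - Ib (S n))).
{ apply (@is_RInt_minus R_NormedModule); apply (@RInt_correct R_CompleteNormedModule); apply ex_Ifun. }
apply (@is_RInt_unique R_CompleteNormedModule) in H1. rewrite <- H1.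
unfold Jb. apply RInt_le. lra. apply ex_Jfun. eexists. apply (@is_RInt_minus R_NormedModule); apply (@RInt_correct R_CompleteNormedModule); apply ex_Ifun.
intros x Hx. unfold Jfun, Ifun.
replace (2 * S n)%nat with (S (S (2*n))) by lia. repeat rewrite <- tech_pow_Rmult.
assert (Hc : 0 <= cos x) by (apply cos_ge_0; lra).
assert (HC : 0 <= cos x ^ (2 * n)) by (apply pow_le; lra).
assert (Hxs : x * cos x <= sin x) by (apply xcos_le_sin; lra).
assert (Hxc : 0 <= x * cos x) by (apply Rmult_le_pos; lra).
assert (E : sin x ^ 2 + cos x ^ 2 = 1) by (rewrite <- (sin2_cos2 x); unfold Rsqr; ring).
assert (Hsq : (x * cos x) ^ 2 <= sin x ^ 2) by nra.
assert (Hsq2 : (x * cos x) ^ 2 * cos x ^ (2 * n) <= sin x ^ 2 * cos x ^ (2 * n)) by (apply Rmult_le_compat_r; auto).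
replace (sin x ^ 2) with (1 - cos x ^ 2) in Hsq2 by lra.
simpl pow in Hsq2 |- *. 
nra.
Qed.

Lemma Ib_pos n : 0 < Ib n.
Proof.
induction n. rewrite Ib_0. apply PI2_pos.
pose proof (Ib_rec n). pose proof (pos_INR n).
assert (Ib (S n) = (2 * INR n + 1) / (2 * INR n + 2) * Ib n) by (apply (Rmult_eq_reg_l (2 * INR n + 2)); [rewrite H; field; lra | lra]).
rewrite H1. apply Rmult_lt_0_compat; auto. apply Rdiv_lt_0_compat; lra.
Qed.

Definition ub n := Jb n / Ib n.

Lemma ub_step n : 1 / (INR n + 1) ^ 2 = 2 * (ub n - ub (S n)).
Proof.
pose proof (Ib_rec n). pose proof (Jb_rec n). pose proof (Ib_pos n). pose proof (Ib_pos (S n)). pose proof (pos_INR n).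
unfold ub.
assert (Ib (S n) = (2 * INR n + 1) / (2 * INR n + 2) * Ib n) by (apply (Rmult_eq_reg_l (2 * INR n + 2)); [rewrite H; field; lra | lra]).
rewrite H4 in H0 |- *.
assert (Jb (S n) = ((INR n + 1) * (2 * INR n + 1) * Jb n - (2 * INR n + 1) / (2 * INR n + 2) * Ib n) / (2 * (INR n + 1) ^ 2)).
{ replace (Jb (S n)) with ((2 * (INR n + 1) ^ 2 * Jb (S n)) / (2 * (INR n + 1) ^ 2)) by (field; lra).
  apply (f_equal (fun t => t / (2 * (INR n + 1) ^ 2))). lra. }
rewrite H5. field. split; nra.
Qed.

Lemma ub_bound n : 0 <= ub (S n) <= 1 / (2 * INR n + 1).
Proof.
pose proof (Ib_rec n). pose proof (Jb_le n). pose proof (Jb_ge0 (S n)). pose proof (Ib_pos n). pose proof (Ib_pos (S n)). pose proof (pos_INR n).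
unfold ub. split. apply Rdiv_le_0_compat; lra.
assert (Ib n = (2 * INR n + 2) / (2 * INR n + 1) * Ib (S n)) by (apply (Rmult_eq_reg_l (2 * INR n + 1)); [rewrite <- H; field; lra | lra]).
rewrite H5 in H0.
apply (Rmult_le_reg_r (Ib (S n))); auto. field_simplify; [|lra|lra]. 
replace ((2 * INR n + 2) / (2 * INR n + 1) * Ib (S n) - Ib (S n)) with (Ib (S n) / (2 * INR n + 1)) in H0 by (field; lra).
lra.
Qed.
Lemma lim_inv_lin (s t : R) : 0 < s -> 0 < t -> is_lim_seq (fun n => / (s * INR n + t)) 0.
Proof.
intros Hs Ht.
replace (Finite 0) with (Rbar_inv p_infty) by reflexivity.
apply is_lim_seq_inv; [|discriminate].
eapply is_lim_seq_plus.
- apply is_lim_seq_scal_l. apply is_lim_seq_INR.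
- apply is_lim_seq_const.
- simpl. unfold Rbar_mult'. simpl. 
  destruct (Rle_dec 0 s); [|lra]. destruct (Rle_lt_or_eq_dec 0 s r); [|lra]. simpl. constructor.
Qed.
Lemma lim_rat (p q s t : R) : 0 < s -> 0 < t ->
  is_lim_seq (fun n => (p * INR n + q) / (s * INR n + t)) (p / s).
Proof.
intros Hs Ht.
apply is_lim_seq_ext with (fun n => p / s + (q - p * t / s) * / (s * INR n + t)).
- intro n. assert (0 <= s * INR n) by (apply Rmult_le_pos; [lra|apply pos_INR]). field. split; lra.
- assert (H : is_lim_seq (fun n => p / s + (q - p * t / s) * / (s * INR n + t)) (p / s + (q - p * t / s) * 0)).
  { apply is_lim_seq_plus'. apply is_lim_seq_const.
    apply is_lim_seq_mult'. apply is_lim_seq_const. apply lim_inv_lin; auto. }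
  replace (p / s + (q - p * t / s) * 0) with (p / s) in H by ring. exact H.
Qed.

Lemma ub_S n : ub (S n) = ub n - 1 / (2 * (INR n + 1) ^ 2).
Proof. pose proof (ub_step n). pose proof (pos_INR n). assert (0 < (INR n + 1)^2) by nra.
 apply (Rmult_eq_reg_l 2). rewrite Rmult_minus_distr_l. replace (2 * (1 / (2 * (INR n + 1) ^ 2))) with (1 / (INR n + 1)^2) by (field; lra). lra. lra. Qed.

Lemma odd_sum N : sum_n (fun k => 1 / (2 * INR k + 1) ^ 2) N = 3 / 2 * ub 0 - 2 * ub (2 * N + 2) + 1 / 2 * ub (N + 1).
Proof.
induction N.
- rewrite sum_O. simpl (2 * 0 + 2)%nat. simpl (0+1)%nat. rewrite !ub_S. simpl INR. match goal with |- ?a = ?b => change (@eq R a b) end. field.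
- assert (Hs : sum_n (fun k => 1 / (2 * INR k + 1) ^ 2) (S N) = sum_n (fun k => 1 / (2 * INR k + 1) ^ 2) N + 1 / (2 * INR (S N) + 1) ^ 2) by exact (sum_Sn _ N).
  rewrite Hs, IHN.
  replace (2 * S N + 2)%nat with (S (S (2 * N + 2))) by lia. replace (S N + 1)%nat with (S (N + 1)) by lia.
  rewrite (ub_S (S (2 * N + 2))), (ub_S (2 * N + 2)), (ub_S (N + 1)).
  rewrite !S_INR, !plus_INR, !mult_INR. simpl INR. pose proof (pos_INR N).
  match goal with |- ?a = ?b => change (@eq R a b) end. field. repeat split; nra.
Qed.

Lemma basel_odd : is_series (fun k => 1 / (2 * INR k + 1) ^ 2) (PI ^ 2 / 8).
Proof.
assert (Hu0 : ub 0 = PI ^ 2 / 12).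
{ unfold ub. rewrite Ib_0, Jb_0. pose proof PI_RGT_0. field. lra. }
assert (L1 : is_lim_seq (fun N => ub (N + 1)) 0).
{ apply is_lim_seq_le_le with (fun _ => 0) (fun N => (0 * INR N + 1) / (2 * INR N + 1)).
  - intro N. replace (N + 1)%nat with (S N) by lia. pose proof (ub_bound N). split. lra.
    replace ((0 * INR N + 1) / (2 * INR N + 1)) with (1 / (2 * INR N + 1)) by (rewrite Rmult_0_l, Rplus_0_l; reflexivity). lra.
  - apply is_lim_seq_const.
  - replace (Finite 0) with (Finite (0 / 2)) by (f_equal; field). apply lim_rat; lra. }
assert (L2 : is_lim_seq (fun N => ub (2 * N + 2)) 0).
{ apply is_lim_seq_le_le with (fun _ => 0) (fun N => (0 * INR N + 1) / (4 * INR N + 3)).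
  - intro N. replace (2 * N + 2)%nat with (S (2 * N + 1)) by lia. pose proof (ub_bound (2 * N + 1)). split. lra.
    replace ((0 * INR N + 1) / (4 * INR N + 3)) with (1 / (2 * INR (2 * N + 1) + 1)). lra.
    rewrite plus_INR, mult_INR. simpl INR. pose proof (pos_INR N). field. lra.
  - apply is_lim_seq_const.
  - replace (Finite 0) with (Finite (0 / 4)) by (f_equal; field). apply lim_rat; lra. }
assert (H : is_lim_seq (sum_n (fun k => 1 / (2 * INR k + 1) ^ 2)) (3 / 2 * ub 0 - 2 * 0 + 1 / 2 * 0)).
{ apply is_lim_seq_ext with (fun N => 3 / 2 * ub 0 - 2 * ub (2 * N + 2) + 1 / 2 * ub (N + 1)).
  intro N. rewrite odd_sum. reflexivity.
  apply is_lim_seq_plus'. apply is_lim_seq_minus'. apply is_lim_seq_const.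
  apply is_lim_seq_scal_l with (lu := Finite 0) (a := 2) in L2. simpl in L2. exact L2.
  apply is_lim_seq_scal_l with (lu := Finite 0) (a := 1/2) in L1. exact L1. }
replace (PI ^ 2 / 8) with (3 / 2 * ub 0 - 2 * 0 + 1 / 2 * 0) by (rewrite Hu0; field).
exact H.
Qed.

Definition cb (m : nat) := binomR (2 * m) m.

Lemma cb_pos m : 0 < cb m.
Proof. unfold cb, binomR, Binomial.C. apply Rdiv_lt_0_compat. apply INR_fact_lt_0. apply Rmult_lt_0_compat; apply INR_fact_lt_0. Qed.

Lemma cb_S m : cb (S m) = 2 * (2 * INR m + 1) / (INR m + 1) * cb m.
Proof.
unfold cb, binomR, Binomial.C.
replace (2 * S m)%nat with (S (S (2 * m))) by lia.
replace (S (S (2 * m)) - S m)%nat with (S m) by lia.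
replace (2 * m - m)%nat with m by lia.
rewrite !fact_simpl, !mult_INR, !S_INR, mult_INR. simpl INR.
pose proof (INR_fact_lt_0 m). pose proof (INR_fact_lt_0 (2 * m)). pose proof (pos_INR m).
field. repeat split; lra.
Qed.

Definition aa (r n : nat) := cb n / cb (n + r + 1).

Lemma term5_eq r n : term5 r n = 1 / ((INR n + 1) * (2 * INR n + 3) * (2 * INR n + 2 * INR r + 3)) * aa r n.
Proof. unfold term5, aa. replace (2 * n + 2 * r + 2)%nat with (2 * (n + r + 1))%nat by lia. reflexivity. Qed.

Lemma aa_Sr r n : aa (S r) n = aa r n * ((INR n + INR r + 2) / (2 * (2 * INR n + 2 * INR r + 3))).
Proof.
unfold aa. replace (n + S r + 1)%nat with (S (n + r + 1)) by lia. rewrite cb_S.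
rewrite !plus_INR. simpl INR. pose proof (cb_pos n). pose proof (cb_pos (n + r + 1)). pose proof (pos_INR n). pose proof (pos_INR r).
field. repeat split; lra.
Qed.

Lemma aa_Sn r n : aa r (S n) = aa r n * ((2 * INR n + 1) * (INR n + INR r + 2) / ((INR n + 1) * (2 * INR n + 2 * INR r + 3))).
Proof.
unfold aa. replace (S n + r + 1)%nat with (S (n + r + 1)) by lia. rewrite !cb_S.
rewrite !plus_INR. simpl INR. pose proof (cb_pos n). pose proof (cb_pos (n + r + 1)). pose proof (pos_INR n). pose proof (pos_INR r).
field. repeat split; lra.
Qed.

Lemma aa_0 n : aa 0 n = (1 * INR n + 1) / (4 * INR n + 2).
Proof.
unfold aa. replace (n + 0 + 1)%nat with (S n) by lia. rewrite cb_S. pose proof (cb_pos n). pose proof (pos_INR n).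
field. repeat split; lra.
Qed.

Lemma aa_lim r : is_lim_seq (aa r) (1 / 4 ^ (S r)).
Proof.
induction r.
- eapply is_lim_seq_ext. intro n. symmetry. apply aa_0.
  replace (1 / 4 ^ 1) with (1 / 4) by (simpl; field). apply lim_rat; lra.
- eapply is_lim_seq_ext. intro n. symmetry. apply aa_Sr.
  replace (1 / 4 ^ S (S r)) with (1 / 4 ^ S r * (1 / 4)) by (simpl; field; pose proof (pow_lt 4 r); lra).
  apply is_lim_seq_mult'. exact IHr.
  eapply is_lim_seq_ext. intro n. symmetry.
  instantiate (1 := fun n => (1 * INR n + (INR r + 2)) / (4 * INR n + (4 * INR r + 6))).
  simpl. pose proof (pos_INR n). pose proof (pos_INR r). field. lra.
  apply lim_rat. lra. pose proof (pos_INR r). lra.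
Qed.

Lemma tele (G : nat -> R) (L : R) : is_lim_seq G L -> is_series (fun m => G (m + 1)%nat - G (S (m + 1))) (G 1%nat - L).
Proof.
intro H.
assert (Hs : forall N, sum_n (fun m => G (m + 1)%nat - G (S (m + 1))) N = G 1%nat - G (N + 2)%nat).
{ induction N. rewrite sum_O. reflexivity.
  rewrite sum_Sn, IHN. unfold plus; simpl. replace (S (N + 1)) with (N + 2)%nat by lia.
  replace (S (S (N + 1))) with (S N + 2)%nat by lia. match goal with |- ?a = ?b => change (@eq R a b) end. ring. }
assert (H2 : is_lim_seq (fun N => G 1%nat - G (N + 2)%nat) (G 1%nat - L)).
{ apply is_lim_seq_minus'. apply is_lim_seq_const.
  apply (is_lim_seq_incr_n G 2) in H. eapply is_lim_seq_ext; [|exact H]. intro; reflexivity. }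
eapply is_lim_seq_ext in H2. 2: { intro N. symmetry. apply Hs. }
exact H2.
Qed.

Definition Tt (r n : nat) := 1 / ((INR n + 1) * (2 * INR n + 3) * (2 * INR n + 2 * INR r + 3)) * aa r n.
Definition GG (r n : nat) := (2 * INR n + INR r + 2) / (4 * (INR r + 1) ^ 2 * (INR r + 2) * (INR n + INR r + 2)) * aa (S r) n.

Lemma step_id r n : Tt (S r) n = (2 * INR r + 1) / (8 * (INR r + 1)) * Tt r n + (GG r n - GG r (S n)).
Proof.
unfold Tt, GG. rewrite aa_Sn, !aa_Sr. rewrite !S_INR.
pose proof (pos_INR n). pose proof (pos_INR r).
field. repeat split; nra.
Qed.

Lemma GG_lim r : is_lim_seq (GG r) (2 / (4 * (INR r + 1) ^ 2 * (INR r + 2)) * (1 / 4 ^ S (S r))).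
Proof.
pose proof (pos_INR r).
apply is_lim_seq_mult'. 2: apply aa_lim.
eapply is_lim_seq_ext. intro n. symmetry.
instantiate (1 := fun n => (2 * INR n + (INR r + 2)) / ((4 * (INR r + 1) ^ 2 * (INR r + 2)) * INR n + (4 * (INR r + 1) ^ 2 * (INR r + 2)) * (INR r + 2))).
simpl. pose proof (pos_INR n). assert (HP: 0 < 4 * ((INR r + 1) * (INR r + 1)) * (INR r + 2)) by (repeat apply Rmult_lt_0_compat; lra). field. repeat split; nra.
apply lim_rat; nra.
Qed.

Definition R0 (x b b1 p H : R) :=
  1 / (2 * (2 * x + 1) * b) - 1 / (3 * (2 * x + 3) * b1)
  - 1 / (2 * p) * (1 / (4 * (x + 1)) + b / (2 * (4 * p)) * (PI ^ 2 / 2 + H)).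

Definition ff := fun k => 4 ^ k / (INR k ^ 2 * binomR (2 * k) k).

Lemma rhs5_eq r : rhs5 r = R0 (INR r) (cb r) (cb (S r)) (4 ^ r) (sum1 ff r).
Proof.
unfold rhs5, R0, cb, ff.
replace (2 * r + 2)%nat with (2 * S r)%nat by lia. replace (r + 1)%nat with (S r) by lia.
replace (2 * r + 1)%nat with (S (2 * r)) by lia. rewrite <- tech_pow_Rmult, pow_mult.
replace (2 ^ 2) with 4 by ring. simpl pow. reflexivity.
Qed.

Lemma cb0 : cb 0 = 1.
Proof. unfold cb, binomR, Binomial.C. simpl. field. Qed.

Lemma rhs_step r : rhs5 (S r) = (2 * INR r + 1) / (8 * (INR r + 1)) * rhs5 r
   + (GG r 1 - 2 / (4 * (INR r + 1) ^ 2 * (INR r + 2)) * (1 / 4 ^ S (S r))).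
Proof.
rewrite !rhs5_eq.
change (sum1 ff (S r)) with (sum1 ff r + ff (S r)).
replace (ff (S r)) with (4 ^ S r / (INR (S r) ^ 2 * cb (S r))) by reflexivity.
unfold GG, aa. replace (1 + S r + 1)%nat with (S (S (S r))) by lia.
rewrite !cb_S, cb0. rewrite !S_INR. simpl INR. unfold R0. simpl pow.
set (H := sum1 ff r). pose proof (cb_pos r). pose proof (pow_lt 4 r). pose proof (pos_INR r).
field. repeat split; nra.
Qed.

Definition G0 (n : nat) := 1 / (2 * INR n + 1).

Lemma odd_shift2 : is_series (fun k => 1 / (2 * INR (S (S k)) + 1) ^ 2) (PI ^ 2 / 8 - 1 - 1 / 9).
Proof.
apply (is_series_incr_1 (fun k => 1 / (2 * INR (S k) + 1) ^ 2)).
apply (is_series_incr_1 (fun k => 1 / (2 * INR k + 1) ^ 2)).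
match goal with |- is_series _ ?v => replace v with (PI ^ 2 / 8) end.
apply basel_odd.
unfold plus; simpl. field.
Qed.

Lemma base_case : is_series (fun m => term5 0 (m + 1)) (rhs5 0).
Proof.
assert (LG : is_lim_seq G0 0).
{ eapply is_lim_seq_ext. intro n. instantiate (1 := fun n => (0 * INR n + 1) / (2 * INR n + 1)). unfold G0. simpl. f_equal. ring.
  replace (Finite 0) with (Finite (0 / 2)) by (f_equal; field). apply lim_rat; lra. }
pose proof (tele G0 0 LG) as T.
pose proof (@is_series_scal R_AbsRing R_NormedModule (1/8) _ _ T) as T1.
pose proof (@is_series_scal R_AbsRing R_NormedModule (-1/4) _ _ odd_shift2) as T2.
pose proof (@is_series_plus R_AbsRing R_NormedModule _ _ _ _ T1 T2) as T3.
eapply is_series_ext in T3.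
2: { intro m. instantiate (1 := fun m => term5 0 (m + 1)). simpl.
     rewrite term5_eq, aa_0. unfold G0. unfold scal, plus; simpl; unfold mult; simpl.
     fixINR. replace (m + 1)%nat with (S m) by lia. rewrite ?S_INR. pose proof (pos_INR m).
     match goal with |- ?a = ?b => change (@eq R a b) end.
     field. repeat split; nra. }
replace (rhs5 0) with (plus (scal (1/8) (G0 1 - 0)) (scal (-1/4) (PI ^ 2 / 8 - 1 - 1 / 9))). exact T3.
unfold scal, plus; simpl; unfold mult; simpl. unfold G0, rhs5, binomR, Binomial.C. simpl. field.
Qed.

Theorem theorem5p0p5 (r : nat) :
  is_series (fun m : nat => term5 r (m + 1)) (rhs5 r).
Proof.
induction r.
- apply base_case.
- pose proof (tele (GG r) _ (GG_lim r)) as T.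
  pose proof (@is_series_scal R_AbsRing R_NormedModule ((2 * INR r + 1) / (8 * (INR r + 1))) _ _ IHr) as T1.
  pose proof (@is_series_plus R_AbsRing R_NormedModule _ _ _ _ T1 T) as T3.
  rewrite rhs_step.
  eapply is_series_ext. 2: exact T3.
  intro m. cbv beta. rewrite !term5_eq. fold (Tt (S r) (m + 1)). fold (Tt r (m + 1)).
  rewrite step_id. reflexivity.
Qed.
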